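(* Let $X$ be a nonempty set and let $G$ be a permutation group on $X$ which separates $X$. Then $G$ does not satisfy any group law; that is, for every $k\ge 1$ and every nontrivial element $w\ne 1$ of the free group $F_k$ on generators $f_1,\dots,f_k$, there exist $g_1,\dots,g_k\in G$ with $w(g_1,\dots,g_k)\neq 1$.
   Context: A permutation group $G$ on a set $X$ separates $X$ if for every finite subset $Y\subseteq X$, the pointwise stabilizer $G_Y=\{g\in G: y^g=y \text{ for all } y\in Y\}$ fixes no point of $X\setminus Y$. For $w\in F_k$ and $g_1,\dots,g_k\in G$, $w(g_1,\dots,g_k)$ denotes the element of $G$ obtained by substituting $f_i=g_i$. A group satisfies the group law $w$ if $w(g_1,\dots,g_k)=1$ for all $g_i\in G$. *)

(* Defs.v *)
From Stdlib Require List.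
From mathcomp Require Import all_boot.
Set Implicit Arguments. Unset Strict Implicit. Unset Printing Implicit Defensive.

Record Perm (X : Type) := MkPerm {
  pfun : X -> X;
  pinvf : X -> X;
  pfunK : forall x, pinvf (pfun x) = x;
  pinvK : forall x, pfun (pinvf x) = x }.

Definition pid (X : Type) : Perm X := @MkPerm X id id (fun _ => erefl) (fun _ => erefl).

(* right-action product: x^(g h) = (x^g)^h *)
Program Definition pmul (X : Type) (g h : Perm X) : Perm X :=
  @MkPerm X (fun x => pfun h (pfun g x)) (fun x => pinvf g (pinvf h x)) _ _.
Next Obligation. by rewrite pfunK pfunK. Qed.
Next Obligation. by rewrite pinvK pinvK. Qed.

Definition pinv (X : Type) (g : Perm X) : Perm X :=
  @MkPerm X (pinvf g) (pfun g) (@pinvK X g) (@pfunK X g).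

Definition is_perm_group (X : Type) (G : Perm X -> Prop) : Prop :=
  [/\ G (pid X),
      (forall g h, G g -> G h -> G (pmul g h)) &
      (forall g, G g -> G (pinv g))].

Definition separates (X : Type) (G : Perm X -> Prop) : Prop :=
  forall (Y : seq X) (x : X), ~ List.In x Y ->
    exists g, G g /\ (forall y, List.In y Y -> pfun g y = y) /\ pfun g x <> x.

(* Elements of the free group F_k, as reduced words in f_1..f_k and inverses.
   A letter (i, b) is f_i if b = false and f_i^{-1} if b = true. *)
Definition letter (k : nat) := ('I_k * bool)%type.

Fixpoint reduced (k : nat) (w : seq (letter k)) : bool :=
  match w with
  | a :: ((b :: _) as w') => ~~ ((a.1 == b.1) && (a.2 != b.2)) && reduced w'
  | _ => true
  end.

(* Substitution f_i := g_i, acting on the right: x^(l1 l2 ... ln). *)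
Definition letter_act (X : Type) (k : nat) (gs : 'I_k -> Perm X) (l : letter k) : X -> X :=
  if l.2 then pinvf (gs l.1) else pfun (gs l.1).

Definition word_act (X : Type) (k : nat) (gs : 'I_k -> Perm X) (w : seq (letter k)) (x : X) : X :=
  foldl (fun y l => letter_act gs l y) x w.

(* Main.v *)
Require Import Defs.
From Stdlib Require List.
From Stdlib Require Import Classical ClassicalEpsilon.
From mathcomp Require Import all_boot.
Set Implicit Arguments. Unset Strict Implicit.

Lemma fixes_inv (X : Type) (h : Perm X) d : pfun h d = d -> pinvf h d = d.
Proof. by move=> E; rewrite -{1}E pfunK. Qed.

Lemma orbit_out (X : Type) (G : Perm X -> Prop) : separates G ->
  forall (D S : seq X) x, ~ List.In x D ->
  exists h, G h /\ (forall y, List.In y D -> pfun h y = y) /\ ~ List.In (pfun h x) S.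
Proof.
move=> sep D S x xD.
apply: NNPP => H.
pose P s := s <> x /\ exists h, G h /\ (forall y, List.In y D -> pfun h y = y) /\ pfun h x = s.
pose O := List.filter (fun s => if excluded_middle_informative (P s) then true else false) S.
have [g [Gg [fixg gx]]] : exists g, G g /\ (forall y, List.In y (D ++ O) -> pfun g y = y) /\ pfun g x <> x.
  apply: sep.
  move=> /(List.in_app_or D O x) [//|/List.filter_In [_]].
  by case: excluded_middle_informative => // -[].
have fixD : forall y, List.In y D -> pfun g y = y.
  by move=> y yD; apply: fixg; apply: List.in_or_app; left.
have inS : List.In (pfun g x) S.
  by apply: NNPP => nS; apply: H; exists g.
have inO : List.In (pfun g x) O.
  apply/List.filter_In; split=> //.
  case: excluded_middle_informative => // nP; exfalso; apply: nP; split => //; exists g; done.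
have E := fixg (pfun g x) (List.in_or_app _ _ _ (or_intror inO)).
apply: gx. by have := congr1 (pinvf g) E; rewrite !pfunK.
Qed.

Fixpoint trajb {X : Type} {k} (gs : 'I_k -> Perm X) x (w : seq (letter k)) : seq X :=
  if w is l :: w' then x :: trajb gs (letter_act gs l x) w' else [::].
Fixpoint steps {X : Type} {k} (gs : 'I_k -> Perm X) x (w : seq (letter k)) : seq (X * letter k) :=
  if w is l :: w' then (x, l) :: steps gs (letter_act gs l x) w' else [::].

Lemma word_act_cons (X : Type) k (gs : 'I_k -> Perm X) l w x :
  word_act gs (l :: w) x = word_act gs w (letter_act gs l x).
Proof. by []. Qed.

Lemma word_act_rcons (X : Type) k (gs : 'I_k -> Perm X) l w x :
  word_act gs (rcons w l) x = letter_act gs l (word_act gs w x).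
Proof. by rewrite /word_act foldl_rcons. Qed.

Lemma trajb_rcons (X : Type) k (gs : 'I_k -> Perm X) l w x :
  trajb gs x (rcons w l) = rcons (trajb gs x w) (word_act gs w x).
Proof. by elim: w x => //= a w IH x; rewrite IH. Qed.

Lemma steps_trajb (X : Type) k (gs : 'I_k -> Perm X) w x y l :
  List.In (y, l) (steps gs x w) -> List.In y (trajb gs x w).
Proof.
elim: w x => //= a w IH x [E|Hin]; first by case: E => ->; left.
by right; apply: IH Hin.
Qed.

Lemma steps_res (X : Type) k (gs : 'I_k -> Perm X) w x y l :
  List.In (y, l) (steps gs x w) ->
  List.In (letter_act gs l y) (trajb gs x w) \/ exists q, w = rcons q l.
Proof.
elim: w x => //= a w IH x [E|Hin].
- case: E => <- <-; case: w {IH} => [|b w] /=.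
  + by right; exists [::].
  + by left; right; left.
- case: (IH _ Hin) => [I|[q ->]]; first by left; right.
  by right; exists (a :: q).
Qed.

Lemma traj_agree (X : Type) k (gs gs' : 'I_k -> Perm X) w x :
  (forall y l, List.In (y, l) (steps gs x w) -> letter_act gs' l y = letter_act gs l y) ->
  trajb gs' x w = trajb gs x w /\ word_act gs' w x = word_act gs w x.
Proof.
elim: w x => [|a w IH] x H //.
have E := H x a (or_introl erefl).
rewrite !word_act_cons /= E.
have [-> ->] := IH (letter_act gs a x) (fun y l Hin => H y l (or_intror Hin)).
by [].
Qed.

Lemma in_rcons_last (X : Type) (T : seq X) z : List.In z (rcons T z).
Proof. by rewrite -cats1; apply: List.in_or_app; right; left. Qed.

Lemma nodup_rcons (X : Type) (T : seq X) z :
  List.NoDup T -> ~ List.In z T -> List.NoDup (rcons T z).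
Proof.
elim: T => [|a T IH] /= nd nz; first by constructor; [done|constructor].
inversion nd; subst; constructor.
  rewrite -cats1 => /(List.in_app_or T [:: z] a) [//|[E|//]].
  by apply: nz; left.
by apply: IH => // Hz; apply: nz; right.
Qed.

Lemma nodup_rcons_notin (X : Type) (T : seq X) z :
  List.NoDup (rcons T z) -> ~ List.In z T.
Proof.
elim: T => [|a T IH] /= nd; first by [].
case=> [E|Hz].
  subst; inversion nd; subst; apply: H1; exact: in_rcons_last.
by inversion nd; subst; apply: IH.
Qed.

Lemma reduced_cons k (c : letter k) s : reduced (c :: s) -> reduced s.
Proof. by case: s => //= d s /andP[]. Qed.

Lemma reduced_rcons k (p : seq (letter k)) l : reduced (rcons p l) -> reduced p.
Proof.
elim: p => [|a p IH] //=.
case: p IH => [|b p] IH //= /andP [c r].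
by rewrite c /= -/(reduced (b :: p)) IH.
Qed.

Lemma reduced_last k (q : seq (letter k)) a b :
  reduced (rcons (rcons q a) b) -> ~~ ((a.1 == b.1) && (a.2 != b.2)).
Proof.
elim: q => [|c q IH] /=; first by rewrite andbT.
by move/reduced_cons.
Qed.

Lemma main (X : Type) (G : Perm X -> Prop) :
  inhabited X -> is_perm_group G -> separates G ->
  forall k (w : seq (letter k)), reduced w ->
  exists gs : 'I_k -> Perm X, (forall i, G (gs i)) /\
    exists x, List.NoDup (rcons (trajb gs x w) (word_act gs w x)).
Proof.
move=> [x0] [G1 GM GI] sep k w.
elim/last_ind: w => [|p l IH] red.
  exists (fun _ => pid X); split => //; exists x0.
  by constructor; [done|constructor].
have [gs [Ggs [x nd]]] := IH (reduced_rcons red).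
set D := trajb gs x p in nd *. set xj := word_act gs p x in nd *.
have xjD : ~ List.In xj D := nodup_rcons_notin nd.
case: l red => i b red.
case: b red => red.
- have [h [Gh [fixh hS]]] := orbit_out sep (map (pfun (gs i)) (rcons D xj)) xjD.
  pose ng := pmul (gs i) (pinv h).
  pose gs' := fun j => if j == i then ng else gs j.
  exists gs'; split.
    by move=> j; rewrite /gs'; case: eqP => _ //; apply: GM => //; apply: GI.
  exists x.
  have [Etr Ewa] : trajb gs' x p = D /\ word_act gs' p x = xj.
    apply: traj_agree => y [j c] Hin.
    move: Hin; rewrite /letter_act /gs' /=; case: eqP => [-> |] // Hin.
    case: c Hin => Hin /=.
    + by rewrite fixh //; exact: steps_trajb Hin.
    + case: (steps_res Hin) => [Iz|[q Eq]].
        by rewrite fixes_inv // fixh.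
      by subst p; move: (reduced_last red); rewrite /= eqxx.
  rewrite trajb_rcons word_act_rcons Etr Ewa.
  apply: nodup_rcons => // HT.
  rewrite /letter_act /gs' /= eqxx /= in HT.
  apply: hS; rewrite -[pfun h xj](pinvK (gs i)); exact: List.in_map.
- have [h [Gh [fixh hS]]] := orbit_out sep (map (pinvf (gs i)) (rcons D xj)) xjD.
  pose ng := pmul h (gs i).
  pose gs' := fun j => if j == i then ng else gs j.
  exists gs'; split.
    by move=> j; rewrite /gs'; case: eqP => _ //; apply: GM.
  exists x.
  have [Etr Ewa] : trajb gs' x p = D /\ word_act gs' p x = xj.
    apply: traj_agree => y [j c] Hin.
    move: Hin; rewrite /letter_act /gs' /=; case: eqP => [-> |] // Hin.
    case: c Hin => Hin /=.
    + case: (steps_res Hin) => [Iz|[q Eq]].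
        by rewrite fixes_inv // fixh.
      by subst p; move: (reduced_last red); rewrite /= eqxx.
    + by rewrite fixh //; exact: steps_trajb Hin.
  rewrite trajb_rcons word_act_rcons Etr Ewa.
  apply: nodup_rcons => // HT.
  rewrite /letter_act /gs' /= eqxx /= in HT.
  apply: hS; rewrite -[pfun h xj](pfunK (gs i)); exact: List.in_map.
Qed.

Theorem theorem1 (X : Type) (G : Perm X -> Prop) :
  inhabited X -> is_perm_group G -> separates G ->
  forall (k : nat) (w : seq (letter k)),
    1 <= k -> reduced w -> w <> [::] ->
    exists gs : 'I_k -> Perm X,
      (forall i, G (gs i)) /\ exists x : X, word_act gs w x <> x.
Proof.
move=> inh Gp sep k w _ red wne.
have [gs [Ggs [x nd]]] := main inh Gp sep red.
exists gs; split => //; exists x.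
case: w wne red nd => // l w _ _.
move=> nd E.
rewrite E /= in nd.
inversion nd; subst.
by apply: H1; exact: in_rcons_last.
Qed.
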